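(* Let $K_{1,n-1}$ be the star graph with $n$ nodes, with the node of degree $n-1$ labeled $1$. Then the communicability angles satisfy $$\cos^2\theta_{1q}(K_{1,n-1})=\frac{\tanh^2(\sqrt{n-1})}{(n-2)\,\mathrm{sech}(\sqrt{n-1})+1}\quad\text{for } q\neq 1,$$ $$\cos\theta_{pq}(K_{1,n-1})=\frac{\cosh(\sqrt{n-1})-1}{\cosh(\sqrt{n-1})+n-2}\quad\text{for } p\neq1,\ q\neq1,\ p\neq q.$$
   Context: For a graph with adjacency matrix $A$, the communicability is $G_{pq}=(e^{A})_{pq}$ and the communicability angle $\theta_{pq}\in[0^\circ,90^\circ]$ between nodes $p,q$ is defined by $\cos\theta_{pq}=G_{pq}/\sqrt{G_{pp}G_{qq}}$. *)

(* Defs.v *)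
From HB Require Import structures.
From mathcomp Require Import all_boot all_order all_algebra.
From mathcomp Require Import all_classical all_reals all_analysis.
Set Implicit Arguments. Unset Strict Implicit. Unset Printing Implicit Defensive.
Import Order.TTheory GRing.Theory Num.Theory.
Import numFieldNormedType.Exports.
Local Open Scope ring_scope.

Definition expmx {R : realType} {n : nat} (A : 'M[R]_n) : 'M[R]_n :=
  \matrix_(i, j) limn (fun N => \sum_(0 <= k < N) ((A ^+ k) i j / (k`!)%:R)).

Definition communicability {R : realType} {n : nat} (A : 'M[R]_n) : 'M[R]_n :=
  expmx A.

Definition comm_angle {R : realType} {n : nat} (A : 'M[R]_n) (p q : 'I_n) : R :=
  let G := communicability A in
  acos (G p q / Num.sqrt (G p p * G q q)).

(* Adjacency matrix of the star graph K_{1,n-1} on nodes 'I_n, where the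
   centre (the paper's node 1) is the ordinal with value 0. *)
Definition star_adj {R : realType} (n : nat) : 'M[R]_n :=
  \matrix_(i, j) (if ((val i == 0%N) && (val j != 0%N)) ||
                     ((val j == 0%N) && (val i != 0%N)) then 1 else 0).

Definition cosh {R : realType} (x : R) : R := (expR x + expR (- x)) / 2.
Definition sinh {R : realType} (x : R) : R := (expR x - expR (- x)) / 2.
Definition tanh {R : realType} (x : R) : R := sinh x / cosh x.
Definition sech {R : realType} (x : R) : R := (cosh x)^-1.

(* Main.v *)
Require Import Defs.
From HB Require Import structures.
From mathcomp Require Import all_boot all_order all_algebra.
From mathcomp Require Import all_classical all_reals all_analysis.
From mathcomp Require Import ring lra.
Import Order.TTheory GRing.Theory Num.Theory.
Local Open Scope ring_scope.


Lemma lim3 (R : realType) (a b d y : R) (u : nat -> R) :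
  (forall k, u k = a * exp_coeff y k + b * exp_coeff (-y) k + d * exp_coeff 0 k) ->
  limn (fun N => \sum_(0 <= k < N) u k) = a * expR y + b * expR (-y) + d.
Proof.
move=> hu.
have -> : (fun N => \sum_(0 <= k < N) u k) = (fun N => a * series (exp_coeff y) N +
   b * series (exp_coeff (-y)) N + d * series (exp_coeff 0) N).
  apply/funext => N; rewrite /series /= !mulr_sumr -!big_split /=.
  by apply: eq_bigr => k _; exact: hu.
apply: cvg_lim => //.
have -> : a * expR y + b * expR (-y) + d = a * expR y + b * expR (-y) + d * expR 0.
  by rewrite expR0 mulr1.
apply: cvgD; [apply: cvgD|]; apply: cvgMl_tmp; exact: is_cvg_series_exp_coeff.
Qed.

Section S.
Variable R : realType.
Variable n' : nat.
Local Notation N := n'.+2.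
Let m : R := (n'.+1)%:R.
Variable x : R.
Hypothesis hx : x ^+ 2 = m.
Hypothesis x0 : x != 0.

Let e k := (x ^+ k + (- x) ^+ k) / 2.
Let o k := (x ^+ k - (- x) ^+ k) / (2 * x).
Definition F (i j : 'I_N) k :=
  if val i == 0%N then (if val j == 0%N then e k else o k)
  else if val j == 0%N then o k
  else e k / m + (k == 0%N)%:R * ((i == j)%:R - m^-1).

Lemma m0 : m != 0. Proof. by rewrite pnatr_eq0. Qed.
Lemma m0' : 1 + n'%:R != 0 :> R. Proof. by rewrite addrC natr1 pnatr_eq0. Qed.
Lemma f0 k : k`!%:R != 0 :> R. Proof. by rewrite pnatr_eq0 -lt0n fact_gt0. Qed.
Ltac sd := repeat (apply/andP; split); rewrite ?x0 ?m0 ?m0' ?f0 //.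

Lemma eS k : e k.+1 = m * o k.
Proof. rewrite /e /o -hx !exprS; field. by rewrite x0. Qed.
Lemma oS k : o k.+1 = e k.
Proof. rewrite /o /e !exprS; field. by rewrite x0. Qed.

Lemma powF k i j : (star_adj N ^+ k) i j = F i j k.
Proof.
elim: k i j => [|k IH] i j.
  rewrite expr0 mxE /F /e /o !expr0 subrr mul0r.
  case: (unliftP ord0 i) => [i'|] -> ; case: (unliftP ord0 j) => [j'|] -> /=.
  - rewrite mul1r; field; by rewrite addrC natr1 pnatr_eq0.
  - by [].
  - by [].
  - by field.
rewrite exprSr mxE big_ord_recl.
rewrite !IH.
under eq_bigr => l _ do rewrite IH.
rewrite /star_adj.
under eq_bigr => l _ do rewrite mxE.
rewrite mxE.
case: (unliftP ord0 i) => [i'|] -> ; case: (unliftP ord0 j) => [j'|] -> /=.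
- rewrite mulr1 big1 ?addr0 => [|l _]; last by rewrite mulr0.
  rewrite /F /= eS mul0r addr0 [_ / m]mulrC mulKf //; exact: m0.
- rewrite mulr0 add0r.
  under eq_bigr => l _ do rewrite mulr1 /F /=.
  rewrite big_split /= sumr_const card_ord -mulr_sumr big_split /= sumr_const card_ord.
  have -> : \sum_(l < n'.+1) ((lift ord0 i' == lift ord0 l)%:R : R) = 1.
    rewrite (bigD1 i') //= eqxx big1 ?addr0 // => l hl.
    by rewrite (inj_eq (@lift_inj _ ord0)) eq_sym (negbTE hl).
  rewrite -(mulr_natr (e k / m)) -(mulr_natr (- m^-1)) -/m mulNr mulVf ?m0 // subrr mulr0 addr0 divfK ?m0 //.
  by rewrite /F /= oS.
- rewrite mulr1 big1 ?addr0 => [|l _]; last by rewrite mulr0.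
  by rewrite /F /= oS.
- rewrite mulr0 add0r.
  under eq_bigr => l _ do rewrite mulr1 /F /=.
  by rewrite sumr_const card_ord /F /= eS -mulr_natl.
Qed.
Lemma G_entry i j : expmx (star_adj N) i j =
  limn (fun M => \sum_(0 <= k < M) (F i j k / k`!%:R)).
Proof.
rewrite /expmx mxE.
have -> : (fun M => \sum_(0 <= k < M) ((star_adj N ^+ k) i j / k`!%:R)) =
  (fun M => \sum_(0 <= k < M) (F i j k / k`!%:R)).
  by apply/funext => M; apply: eq_bigr => k _; rewrite powF.
by [].
Qed.

Lemma G00 : expmx (star_adj N) ord0 ord0 = cosh x.
Proof.
rewrite G_entry (@lim3 _ (1/2) (1/2) 0 x); first by rewrite /cosh; field.
move=> k; rewrite /F /e /= /exp_coeff /=.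
field; by rewrite pnatr_eq0 -lt0n fact_gt0.
Qed.

Lemma G0q q' : expmx (star_adj N) ord0 (lift ord0 q') = sinh x / x.
Proof.
rewrite G_entry (@lim3 _ (1/(2*x)) (-1/(2*x)) 0 x); first by rewrite /sinh; field.
move=> k; rewrite /F /o /= /exp_coeff /=.
field; rewrite ?x0 //; by rewrite pnatr_eq0 -lt0n fact_gt0.
Qed.

Lemma Gqq q' : expmx (star_adj N) (lift ord0 q') (lift ord0 q') = cosh x / m + 1 - m^-1.
Proof.
rewrite G_entry (@lim3 _ (1 / (2 * m)) (1 / (2 * m)) (1 - m^-1) x).
  rewrite /cosh; field; sd.
move=> k; rewrite /F /e /= /exp_coeff /= eqxx expr0n -/m.
rewrite (_ : true%:R = 1 :> R) //; field; sd.
Qed.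

Lemma Gpq p' q' : p' != q' ->
  expmx (star_adj N) (lift ord0 p') (lift ord0 q') = cosh x / m - m^-1.
Proof.
move=> hpq.
rewrite G_entry (@lim3 _ (1 / (2 * m)) (1 / (2 * m)) (- m^-1) x).
  rewrite /cosh; field; sd.
move=> k; rewrite /F /e /= /exp_coeff /= expr0n -/m.
rewrite (inj_eq (@lift_inj _ ord0)) (negbTE hpq).
rewrite (_ : false%:R = 0 :> R) //; field; sd.
Qed.


End S.



Lemma cos_acos_ratio (R : realType) (a b : R) : 0 <= a -> 0 < b -> a ^+ 2 <= b ->
  cos (acos (a / Num.sqrt b)) = a / Num.sqrt b.
Proof.
move=> a0 b0 ab; apply: acosK; rewrite in_itv /=.
have sb : 0 < Num.sqrt b by rewrite sqrtr_gt0.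
apply/andP; split.
  by apply: (le_trans (_ : -1 <= 0)) => //; rewrite ?lerN10 // divr_ge0 // ltW.
rewrite ler_pdivrMr // mul1r.
by rewrite -(ger0_norm a0) -sqrtr_sqr ler_wsqrtr.
Qed.

Lemma cosh_sinh (R : realType) (x : R) : cosh x ^+ 2 - sinh x ^+ 2 = 1.
Proof.
rewrite /cosh /sinh expRN.
have : expR x != 0 by rewrite gt_eqF // expR_gt0.
move=> h; field; exact: h.
Qed.

Lemma cosh_gt0 (R : realType) (x : R) : 0 < cosh x.
Proof. by rewrite /cosh divr_gt0 // addr_gt0 // expR_gt0. Qed.

Lemma sinh_gt0 (R : realType) (x : R) : 0 < x -> 0 < sinh x.
Proof.
move=> x0; rewrite /sinh divr_gt0 // subr_gt0 ltr_expR.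
by apply: (lt_trans (_ : -x < 0)); rewrite ?oppr_lt0.
Qed.

Lemma cosh_ge1 (R : realType) (x : R) : 1 <= cosh x.
Proof.
have h := cosh_sinh _ x; have c0 := cosh_gt0 _ x.
have s0 := sqr_ge0 (sinh x).
have h1 : 1 <= cosh x ^+ 2 by lra.
rewrite expr2 in h1; nra.
Qed.

Theorem proposition4p3 (R : realType) (n : nat) (hn : (2 <= n)%N) :
  (forall p q : 'I_n, val p = 0%N -> val q <> 0%N ->
     cos (comm_angle (@star_adj R n) p q) ^+ 2 =
       tanh (Num.sqrt (n.-1)%:R) ^+ 2 /
         ((n - 2)%:R * sech (Num.sqrt (n.-1)%:R) + 1)) /\
  (forall p q : 'I_n, val p <> 0%N -> val q <> 0%N -> p <> q ->
     cos (comm_angle (@star_adj R n) p q) =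
       (cosh (Num.sqrt (n.-1)%:R) - 1) /
         (cosh (Num.sqrt (n.-1)%:R) + (n - 2)%:R)).
Proof.
case: n hn => [|[|n']] // _.
change (n'.+2).-1 with n'.+1.
have -> : (n'.+2 - 2)%N = n' by rewrite subSS subSS subn0.
set x : R := Num.sqrt (n'.+1)%:R.
have xp : 0 < x by rewrite sqrtr_gt0 ltr0n.
have x0 : x != 0 by rewrite gt_eqF.
have hx : x ^+ 2 = (n'.+1)%:R by rewrite sqr_sqrtr // ler0n.
have c0 := cosh_gt0 _ x; have c1 := cosh_ge1 _ x; have s0 := sinh_gt0 _ _ xp.
have hcs := cosh_sinh _ x.
have m0 : (n'.+1)%:R != 0 :> R by rewrite pnatr_eq0.
have m0' : 1 + n'%:R != 0 :> R by rewrite addrC natr1 pnatr_eq0.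
have n0 : 0 <= n'%:R :> R by rewrite ler0n.
have cn0 : cosh x + n'%:R != 0 by rewrite gt_eqF // ltr_wpDr.
have c0' : cosh x != 0 by rewrite gt_eqF.
have hd : cosh x / (n'.+1)%:R + 1 - (n'.+1)%:R^-1 = (cosh x + n'%:R) / (n'.+1)%:R.
  field; exact: m0'.
have Dp : 0 < (cosh x + n'%:R) / (n'.+1)%:R by rewrite divr_gt0 ?ltr0n // ltr_wpDr.
split.
- move=> p q hp hq.
  have -> : p = ord0 by apply: val_inj.
  case: (unliftP ord0 q) => [q' ->|hq0]; last by move: hq; rewrite hq0.
  rewrite /comm_angle /communicability (G00 _ _ _ hx x0) (G0q _ _ _ hx x0) (Gqq _ _ _ hx x0) hd.
  have hs2 : (sinh x / x) ^+ 2 = (cosh x ^+ 2 - 1) / (n'.+1)%:R.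
    rewrite expr_div_n hx; congr (_ / _); lra.
  rewrite /tanh /sech.
  move: hcs c0 c0' cn0 s0 Dp c1 hs2; generalize (cosh x) (sinh x) => c s hcs c0 c0' cn0 s0 Dp c1 hs2.
  rewrite cos_acos_ratio.
  + rewrite expr_div_n (sqr_sqrtr (ltW (mulr_gt0 c0 Dp))) hs2 !expr_div_n.
    have -> : s ^+ 2 = c ^+ 2 - 1 by lra.
    by field; rewrite c0' addrC cn0 m0'.
  + by apply: divr_ge0; apply: ltW.
  + by rewrite mulr_gt0.
  + rewrite hs2 -subr_ge0.
    have -> : c * ((c + n'%:R) / (n'.+1)%:R) - (c ^+ 2 - 1) / (n'.+1)%:R
       = (c * n'%:R + 1) / (n'.+1)%:R by field; exact: m0'.
    by rewrite divr_ge0 // ?addr_ge0 ?mulr_ge0 // ltW.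
- move=> p q hp hq hpq.
  case: (unliftP ord0 p) => [p' hp'|hp0]; last by move: hp; rewrite hp0.
  case: (unliftP ord0 q) => [q' hq'|hq0]; last by move: hq; rewrite hq0.
  have hpq' : p' != q' by apply/eqP => e; apply: hpq; rewrite hp' hq' e.
  rewrite hp' hq' /comm_angle /communicability (Gpq _ _ _ hx x0 _ _ hpq') !(Gqq _ _ _ hx x0) hd.
  have hn : cosh x / (n'.+1)%:R - (n'.+1)%:R^-1 = (cosh x - 1) / (n'.+1)%:R.
    field; exact: m0'.
  rewrite hn.
  move: hcs c0 c0' cn0 Dp c1; generalize (cosh x) => c hcs c0 c0' cn0 Dp c1.
  rewrite cos_acos_ratio.
  + rewrite sqrtr_sqr ger0_norm ?ltW //; by field; rewrite cn0 m0'.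
  + by apply: divr_ge0; rewrite ?subr_ge0 // ler0n.
  + by rewrite mulr_gt0.
  + have ha : 0 <= (c - 1) / (n'.+1)%:R by apply: divr_ge0; rewrite ?subr_ge0 // ler0n.
    have hb : (c - 1) / (n'.+1)%:R <= (c + n'%:R) / (n'.+1)%:R.
      rewrite ler_pM2r ?invr_gt0 ?ltr0n //; lra.
    move: ha hb; generalize ((c - 1) / (n'.+1)%:R) ((c + n'%:R) / (n'.+1)%:R) => a b ha hb.
    rewrite expr2; nra.
Qed.
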